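(* Let $n>1$ be an integer and let $k$ be an odd positive integer with $k<2^n$. Then there exist signs $\epsilon_1,\dots,\epsilon_{n-2}\in\{+1,-1\}$ (depending on $k$) such that $$\sin\Big(\frac{k\pi}{2^n}\Big)=\frac12\sqrt{2+\epsilon_1\sqrt{2+\epsilon_2\sqrt{2+\cdots+\epsilon_{n-2}\sqrt{2}}}},$$ where the square root sign appears $n-1$ times in total (for $n=2$ the right-hand side is $\frac12\sqrt2$). *)

(* Defs.v *)
From Stdlib Require Import Reals List Arith.
Open Scope R_scope.

(* nested_radical [e1; ...; em] = sqrt(2 + e1 * sqrt(2 + e2 * ... sqrt(2 + em * sqrt 2)))
   It contains exactly (m+1) square roots; nested_radical [] = sqrt 2. *)
Fixpoint nested_radical (eps : list R) : R :=
  match eps with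
  | nil => sqrt 2
  | e :: l => sqrt (2 + e * nested_radical l)
  end.

(* Main.v *)
Require Import Defs.
From Stdlib Require Import Reals List Arith Lra Lia.
Open Scope R_scope.

Lemma sq_pm (y a : R) : y * y = a -> y = sqrt a \/ y = - sqrt a.
Proof.
  intros H. subst a. pose proof (sqrt_Rsqr_abs y) as E. unfold Rsqr in E.
  rewrite E. unfold Rabs. destruct (Rcase_abs y); [right|left]; lra.
Qed.

Lemma cos_odd_half (k : nat) : Nat.Odd k -> cos (INR k * PI / 2) = 0.
Proof.
  intros [m Hm]. subst k. apply cos_eq_0_1. exists (Z.of_nat m).
  rewrite <- INR_IZR_INZ. rewrite plus_INR, mult_INR. simpl. field.
Qed.

Lemma dbl (k j : nat) : 2 * (INR k * PI / 2 ^ (S j)) = INR k * PI / 2 ^ j.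
Proof.
  change (2 ^ S j) with (2 * 2 ^ j). assert (2 ^ j <> 0) by (apply pow_nonzero; lra).
  field. auto.
Qed.

Lemma Q (j : nat) : forall k, Nat.Odd k -> exists eps : list R,
  length eps = j /\ Forall (fun e => e = 1 \/ e = -1) eps /\
  (2 * cos (INR k * PI / 2 ^ (S (S j))) = nested_radical eps \/
   2 * cos (INR k * PI / 2 ^ (S (S j))) = - nested_radical eps).
Proof.
  induction j as [|j IH]; intros k Hk.
  - exists nil. split; [reflexivity|split; [constructor|]].
    apply sq_pm. simpl nested_radical.
    pose proof (cos_2a_cos (INR k * PI / 2 ^ 2)) as C.
    rewrite dbl in C. change (2^1) with (2*1) in C. rewrite Rmult_1_r in C.
    rewrite cos_odd_half in C by auto. nra.
  - destruct (IH k Hk) as [eps [Hl [Hf Hc]]].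
    pose proof (cos_2a_cos (INR k * PI / 2 ^ (S (S (S j))))) as C.
    rewrite dbl in C.
    destruct Hc as [Hc|Hc].
    + exists (1 :: eps). split; [simpl; lia|split; [constructor; auto|]].
      change (nested_radical (1 :: eps)) with (sqrt (2 + 1 * nested_radical eps)). apply sq_pm. nra.
    + exists (-1 :: eps). split; [simpl; lia|split; [constructor; auto|]].
      change (nested_radical (-1 :: eps)) with (sqrt (2 + -1 * nested_radical eps)). apply sq_pm. nra.
Qed.

Theorem lemma3p3 (n k : nat) (hn : (1 < n)%nat) (hk : Nat.Odd k) (hkn : (k < 2 ^ n)%nat) :
  exists eps : list R,
    length eps = (n - 2)%nat /\
    Forall (fun e => e = 1 \/ e = -1) eps /\
    sin (INR k * PI / 2 ^ n) = / 2 * nested_radical eps.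
Proof.
  assert (Hp : 0 < 2 ^ n) by (apply pow_lt; lra).
  assert (Hkr : INR k < 2 ^ n).
  { apply lt_INR in hkn. rewrite pow_INR in hkn. simpl in hkn. exact hkn. }
  assert (Hk0 : 0 < INR k).
  { destruct hk as [m Hm]. subst k. apply lt_0_INR. lia. }
  assert (Hs : 0 < sin (INR k * PI / 2 ^ n)).
  { apply sin_gt_0.
    - apply Rdiv_lt_0_compat; [apply Rmult_lt_0_compat|]; auto. apply PI_RGT_0.
    - apply Rmult_lt_reg_r with (2 ^ n); auto.
      unfold Rdiv. rewrite Rmult_assoc, Rinv_l by lra.
      pose proof PI_RGT_0. nra. }
  assert (Hsq : forall a, 2 * sin (INR k * PI / 2 ^ n) * (2 * sin (INR k * PI / 2 ^ n)) = a ->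
                 sin (INR k * PI / 2 ^ n) = / 2 * sqrt a).
  { intros a Ha. subst a. rewrite sqrt_square by lra. field. }
  destruct n as [|[|n]]; [lia|lia|].
  destruct n as [|j].
  - exists nil. split; [reflexivity|split; [constructor|]].
    simpl nested_radical. apply Hsq.
    pose proof (cos_2a_sin (INR k * PI / 2 ^ 2)) as C.
    rewrite dbl in C. change (2^1) with (2*1) in C. rewrite Rmult_1_r in C.
    rewrite cos_odd_half in C by auto. nra.
  - destruct (Q j k hk) as [eps [Hl [Hf Hc]]].
    pose proof (cos_2a_sin (INR k * PI / 2 ^ (S (S (S j))))) as C.
    rewrite dbl in C.
    destruct Hc as [Hc|Hc].
    + exists (-1 :: eps). split; [simpl; lia|split; [constructor; auto|]].
      change (nested_radical (-1 :: eps)) with (sqrt (2 + -1 * nested_radical eps)). apply Hsq. nra.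
    + exists (1 :: eps). split; [simpl; lia|split; [constructor; auto|]].
      change (nested_radical (1 :: eps)) with (sqrt (2 + 1 * nested_radical eps)). apply Hsq. nra.
Qed.
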